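(* Let $G$ be a finitely generated left-orderable group and $H$ a finite index subgroup of $G$ such that $H$ is Hucha with respect to a family $\mathcal{H}$ of subgroups of $H$. Then $G$ is Hucha with respect to $\mathcal{H}$.
   Context: A positive cone of $G$ is a subsemigroup $P$ with $G=P\sqcup P^{-1}\sqcup\{1\}$; $G$ is left-orderable if it has one. With a finite symmetric generating set $X$ and word metric $d_X$, an $r$-path is a sequence $g_0,\dots,g_n$ with $d_X(g_i,g_{i+1})\le r$. A set $S$ $r$-disconnects subsets $H_1,H_2$ if every $r$-path starting in $H_1$ and ending in $H_2$ meets $S$; $S$ $r$-disconnects $P$ if there are $u,v\in P$ with $S$ $r$-disconnecting $\{u\},\{v\}$. A negative swamp of width $r$ for a subgroup $K$ (with respect to a positive cone $P$) is $S\subseteq P^{-1}$ that $r$-disconnects $P$ and $r$-disconnects $g_1K$ and $g_2K$ for some $g_1,g_2\in G$. A finitely generated left-orderable group $G$ is Hucha with respect to a family $\mathcal{H}$ of subgroups if for some finite generating set $X$ (equivalently, any), for every positive cone $P$, every $K\in\mathcal{H}$ and every $r>0$ there is a negative swamp of width $r$ for $K$ in $\Gamma(G,X)$. *)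

(* Defs.v *)
From Stdlib Require Import List Arith.
Import ListNotations.

Record group := Group {
  carrier :> Type;
  mul : carrier -> carrier -> carrier;
  inv : carrier -> carrier;
  one : carrier;
  mulA : forall x y z, mul x (mul y z) = mul (mul x y) z;
  mul1g : forall x, mul one x = x;
  mulg1 : forall x, mul x one = x;
  mulVg : forall x, mul (inv x) x = one;
  mulgV : forall x, mul x (inv x) = one
}.

Section Defs.
Variable G : group.

Definition subset (A B : G -> Prop) : Prop := forall x, A x -> B x.

Definition subgroup (S : G -> Prop) : Prop :=
  S (one G) /\ (forall x y, S x -> S y -> S (mul G x y)) /\
  (forall x, S x -> S (inv G x)).

Definition finite_index (S : G -> Prop) : Prop :=
  exists T : list G, forall g : G, exists t, In t T /\ exists s, S s /\ g = mul G t s.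

Definition wprod (w : list G) : G := fold_right (mul G) (one G) w.

Definition generates (S : G -> Prop) (X : list G) : Prop :=
  (forall x, In x X -> S x) /\
  (forall x, In x X -> In (inv G x) X) /\
  (forall g, S g -> exists w, (forall x, In x w -> In x X) /\ wprod w = g).

Definition finitely_generated (S : G -> Prop) : Prop := exists X, generates S X.

(* word metric: d_X(g,h) <= r iff g^{-1} h is a product of at most r letters of X *)
Definition dist_le (X : list G) (g h : G) (r : nat) : Prop :=
  exists w, (forall x, In x w -> In x X) /\ length w <= r /\ mul G g (wprod w) = h.

Fixpoint chain (R : G -> G -> Prop) (x : G) (l : list G) : Prop :=
  match l with
  | nil => True
  | y :: l' => R x y /\ chain R y l'
  end.

Definition rpath (X : list G) (r : nat) (x : G) (l : list G) : Prop :=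
  chain (fun a b => dist_le X a b r) x l.

Definition r_disconnects (X : list G) (r : nat) (Sw A B : G -> Prop) : Prop :=
  forall x l, A x -> B (last l x) -> rpath X r x l ->
    exists y, In y (x :: l) /\ Sw y.

Definition positive_cone (S P : G -> Prop) : Prop :=
  subset P S /\
  (forall x y, P x -> P y -> P (mul G x y)) /\
  (forall g, S g -> P g \/ P (inv G g) \/ g = one G) /\
  (forall g, ~ (P g /\ P (inv G g))) /\
  ~ P (one G).

Definition left_orderable (S : G -> Prop) : Prop := exists P, positive_cone S P.

Definition coset (g : G) (K : G -> Prop) : G -> Prop :=
  fun x => exists k, K k /\ x = mul G g k.

Definition negative_swamp (S : G -> Prop) (X : list G) (P K : G -> Prop) (r : nat)
  (Sw : G -> Prop) : Prop :=
  (forall y, Sw y -> P (inv G y)) /\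
  (exists u v, P u /\ P v /\
     r_disconnects X r Sw (fun x => x = u) (fun x => x = v)) /\
  (exists g1 g2, S g1 /\ S g2 /\
     r_disconnects X r Sw (coset g1 K) (coset g2 K)).

Definition Hucha (S : G -> Prop) (F : (G -> Prop) -> Prop) : Prop :=
  left_orderable S /\
  exists X, generates S X /\
    forall P, positive_cone S P ->
    forall K, F K ->
    forall r, 0 < r ->
    exists Sw, negative_swamp S X P K r Sw.

End Defs.

(* Main.v *)
Require Import Defs.
From Stdlib Require Import List Arith Lia Classical ClassicalEpsilon FinFun.
Import ListNotations.

Lemma g_cancel_l (G : group) (a b c : G) : mul G a b = mul G a c -> b = c.
Proof.
  intro E. rewrite <- (mul1g G b), <- (mul1g G c), <- (mulVg G a), <- !mulA, E. reflexivity.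
Qed.

Lemma g_inv_unique (G : group) (a b : G) : mul G a b = one G -> b = inv G a.
Proof. intro E. apply (g_cancel_l G a). rewrite E, mulgV. reflexivity. Qed.

Lemma g_inv_mul (G : group) (a b : G) : inv G (mul G a b) = mul G (inv G b) (inv G a).
Proof.
  symmetry. apply g_inv_unique. rewrite <- mulA, (mulA G b), mulgV, mul1g, mulgV. reflexivity.
Qed.

Lemma g_inv_inv (G : group) (a : G) : inv G (inv G a) = a.
Proof. symmetry. apply g_inv_unique. apply mulVg. Qed.

Lemma g_inv_one (G : group) : inv G (one G) = one G.
Proof. symmetry. apply g_inv_unique. apply mul1g. Qed.

Lemma g_solve (G : group) (a b c : G) : mul G a b = c -> b = mul G (inv G a) c.
Proof. intro E. rewrite <- E, mulA, mulVg, mul1g. reflexivity. Qed.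

Lemma wprod_app (G : group) (w1 w2 : list G) :
  wprod G (w1 ++ w2) = mul G (wprod G w1) (wprod G w2).
Proof.
  induction w1 as [|a w IH]; simpl. - rewrite mul1g; reflexivity.
  - rewrite IH, mulA. reflexivity.
Qed.

Lemma wprod_inv (G : group) (w : list G) :
  wprod G (rev (map (inv G) w)) = inv G (wprod G w).
Proof.
  induction w as [|a w IH]; simpl. - rewrite g_inv_one; reflexivity.
  - rewrite wprod_app, IH, g_inv_mul. simpl. rewrite mulg1. reflexivity.
Qed.

Lemma inv_word (G : group) (X w : list G) :
  (forall x, In x X -> In (inv G x) X) -> (forall x, In x w -> In x X) ->
  forall x, In x (rev (map (inv G) w)) -> In x X.
Proof.
  intros HX Hw x Hx. apply in_rev in Hx. apply in_map_iff in Hx.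
  destruct Hx as [y [<- Hy]]. auto.
Qed.

Lemma words_finite (G : group) (X : list G) (n : nat) :
  exists L : list (list G), forall w, (forall x, In x w -> In x X) -> length w <= n -> In w L.
Proof.
  induction n as [|n [L HL]].
  - exists [[]]. intros w _ Hl. destruct w; simpl in *; [left; reflexivity| lia].
  - exists ([] :: flat_map (fun x => map (cons x) L) X).
    intros w Hw Hl. destruct w as [|a w]. left; reflexivity.
    right. apply in_flat_map. exists a. split. apply Hw; left; reflexivity.
    apply in_map. apply HL. intros; apply Hw; right; assumption. simpl in Hl; lia.
Qed.

Lemma bound_list (G : group) (H : G -> Prop) (Y : list G) (L : list (list G)) :
  (forall g, H g -> exists v, (forall x, In x v -> In x Y) /\ wprod G v = g) ->
  exists N, forall w, In w L -> H (wprod G w) ->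
    exists v, (forall x, In x v -> In x Y) /\ length v <= N /\ wprod G v = wprod G w.
Proof.
  intro HY. induction L as [|w0 L [N HN]].
  - exists 0. intros w [].
  - destruct (classic (H (wprod G w0))) as [h|h].
    + destruct (HY _ h) as [v0 [Hv0 Ev0]]. exists (max N (length v0)).
      intros w [<-|Hw] Hh.
      * exists v0. repeat split; auto. lia.
      * destruct (HN w Hw Hh) as [v [? [? ?]]]. exists v. repeat split; auto. lia.
    + exists N. intros w [<-|Hw] Hh. contradiction. auto.
Qed.

Lemma bound_words (G : group) (H : G -> Prop) (X Y : list G) (n : nat) :
  (forall g, H g -> exists v, (forall x, In x v -> In x Y) /\ wprod G v = g) ->
  exists N, forall w, (forall x, In x w -> In x X) -> length w <= n -> H (wprod G w) ->
    exists v, (forall x, In x v -> In x Y) /\ length v <= N /\ wprod G v = wprod G w.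
Proof.
  intro HY. destruct (words_finite G X n) as [L HL].
  destruct (bound_list G H Y L HY) as [N HN]. exists N. intros; auto.
Qed.

Fixpoint pw (G : group) (x : G) (n : nat) : G :=
  match n with 0 => one G | S m => mul G x (pw G x m) end.

Lemma pw_add (G : group) (x : G) i d : pw G x (i + d) = mul G (pw G x i) (pw G x d).
Proof. induction i; simpl. rewrite mul1g; auto. rewrite IHi, mulA; auto. Qed.

Lemma pigeon (G : group) (T : list G) (f : nat -> G) :
  (forall k, In (f k) T) -> exists i j, i < j /\ f i = f j.
Proof.
  intro Hf. apply NNPP. intro Hn.
  assert (Inj : forall a b, f a = f b -> a = b).
  { intros a b E. destruct (lt_eq_lt_dec a b) as [[l|e]|l]; auto.
    - exfalso; apply Hn; eauto.
    - exfalso; apply Hn; exists b, a; auto. }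
  assert (ND : NoDup (map f (seq 0 (S (length T))))).
  { apply FinFun.Injective_map_NoDup. exact Inj. apply seq_NoDup. }
  apply NoDup_incl_length with (l' := T) in ND.
  - rewrite length_map, length_seq in ND. lia.
  - intros y Hy. apply in_map_iff in Hy. destruct Hy as [k [<- _]]. auto.
Qed.

Lemma pow_in (G : group) (H : G -> Prop) (x : G) :
  subgroup G H -> finite_index G H -> exists n, 0 < n /\ H (pw G x n).
Proof.
  intros [H1 [HM HI]] [T HT].
  set (f := fun k => proj1_sig (constructive_indefinite_description _ (HT (pw G x k)))).
  assert (Hf : forall k, In (f k) T /\ exists s, H s /\ pw G x k = mul G (f k) s).
  { intro k. unfold f. destruct (constructive_indefinite_description _ _) as [t Ht]. exact Ht. }
  destruct (pigeon G T f (fun k => proj1 (Hf k))) as [i [j [Hij E]]].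
  exists (j - i). split. lia.
  destruct (Hf i) as [_ [si [Hsi Ei]]]. destruct (Hf j) as [_ [sj [Hsj Ej]]].
  assert (Ej' : j = i + (j - i)) by lia. rewrite Ej' in Ej at 1. rewrite pw_add in Ej.
  apply g_solve in Ej. rewrite Ei, <- E, g_inv_mul, <- mulA, (mulA G (inv G (f i))), mulVg, mul1g in Ej.
  rewrite Ej. apply HM; auto.
Qed.

Lemma pw_pos (G : group) (P : G -> Prop) (x : G) :
  positive_cone G (fun _ => True) P -> P x -> forall n, P (pw G x n) \/ pw G x n = one G.
Proof.
  intros [_ [PM _]] Px n. induction n; simpl; auto.
  left. destruct IHn as [h|h]. apply PM; auto. rewrite h, mulg1; auto.
Qed.

Lemma cofinal (G : group) (H P : G -> Prop) :
  subgroup G H -> finite_index G H -> positive_cone G (fun _ => True) P ->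
  forall t, exists h, H h /\ (P (mul G t h) \/ mul G t h = one G).
Proof.
  intros HH HF HP t. pose proof HP as [_ [PM [Ptri _]]]. pose proof HH as [H1 _].
  destruct (Ptri t I) as [Pt|[Pt|Et]].
  - exists (one G). rewrite mulg1. auto.
  - destruct (pow_in G H (inv G t) HH HF) as [n [Hn Hp]].
    exists (pw G (inv G t) n). split; auto.
    destruct n. lia. simpl. rewrite mulA, mulgV, mul1g. apply pw_pos; auto.
  - exists (one G). rewrite mulg1. auto.
Qed.

Lemma choose_q (G : group) (H P : G -> Prop) (X : list G) :
  subgroup G H -> finite_index G H -> positive_cone G (fun _ => True) P ->
  generates G (fun _ => True) X ->
  exists M, forall g, exists q wq, (P q \/ q = one G) /\ (forall x, In x wq -> In x X) /\
     length wq <= M /\ wprod G wq = q /\ H (mul G g q).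
Proof.
  intros HH HF HP HX. pose proof HF as [T HT]. pose proof HH as [H1 [HM HI]].
  assert (HB : forall T0 : list G, exists M, forall t, In t T0 -> exists q wq, (P q \/ q = one G) /\
     (forall x, In x wq -> In x X) /\ length wq <= M /\ wprod G wq = q /\ H (mul G (inv G t) q)).
  { induction T0 as [|t0 T0 [M HMM]].
    - exists 0. intros t [].
    - destruct (cofinal G H P HH HF HP t0) as [h [Hh Ph]].
      destruct HX as [_ [_ Hw]]. destruct (Hw (mul G t0 h) I) as [w0 [Hw0 Ew0]].
      exists (max M (length w0)). intros t [<-|Ht].
      + exists (mul G t0 h), w0. repeat split; auto. lia.
        rewrite mulA, mulVg, mul1g. auto.
      + destruct (HMM t Ht) as [q [wq [A [B [C [D E]]]]]]. exists q, wq. repeat split; auto. lia. }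
  destruct (HB T) as [M HMT]. exists M. intro g.
  destruct (HT (inv G g)) as [t [Ht [s [Hs Es]]]].
  destruct (HMT t Ht) as [q [wq [A [B [C [D E]]]]]]. exists q, wq. repeat split; auto.
  assert (g = mul G (inv G s) (inv G t)).
  { rewrite <- g_inv_mul, <- Es, g_inv_inv. auto. }
  rewrite H0, <- mulA. apply HM; auto.
Qed.

Definition rel (G : group) (P H : G -> Prop) (X : list G) (M : nat) (g y : G) : Prop :=
  exists q wq, (P q \/ q = one G) /\ (forall x, In x wq -> In x X) /\ length wq <= M /\
    wprod G wq = q /\ y = mul G g q /\ H y /\ (H g -> y = g).

Lemma relA (G : group) (H P : G -> Prop) (X : list G) M :
  (forall g, exists q wq, (P q \/ q = one G) /\ (forall x, In x wq -> In x X) /\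
     length wq <= M /\ wprod G wq = q /\ H (mul G g q)) ->
  forall g, exists y, rel G P H X M g y.
Proof.
  intros HQ g. destruct (classic (H g)) as [h|h].
  - exists g, (one G), []. simpl. rewrite mulg1. repeat split; auto. intros _ []. lia.
  - destruct (HQ g) as [q [wq [A [B [C [D E]]]]]]. exists (mul G g q), q, wq.
    repeat split; auto. intro; contradiction.
Qed.

Lemma relB (G : group) (R : G -> G -> Prop) :
  (forall g, exists y, R g y) -> forall l, exists l', Forall2 R l l'.
Proof.
  intros HR l. induction l as [|a l [l' IH]]. exists []; constructor.
  destruct (HR a) as [y Hy]. exists (y :: l'). constructor; auto.
Qed.

Lemma path_proj (G : group) (R : G -> G -> Prop) (D1 D2 : G -> G -> Prop) :
  (forall g g' y y', R g y -> R g' y' -> D1 g g' -> D2 y y') ->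
  forall l l', Forall2 R l l' -> forall x x', R x x' -> chain G D1 x l -> chain G D2 x' l'.
Proof.
  intros HD l l' HF. induction HF; intros x0 x0' Rx Hc; simpl in *; auto.
  destruct Hc as [Hc1 Hc2]. split; eauto.
Qed.

Lemma last_proj (G : group) (R : G -> G -> Prop) :
  forall l l', Forall2 R l l' -> forall x x', R x x' -> R (last l x) (last l' x').
Proof.
  intros l l' HF. induction HF; intros x0 x0' Rx; simpl; auto.
  destruct l; destruct l'; auto; inversion HF; auto.
Qed.

Lemma in_proj (G : group) (R : G -> G -> Prop) :
  forall l l', Forall2 R l l' -> forall x x' y', R x x' -> In y' (x' :: l') ->
    exists g, In g (x :: l) /\ R g y'.
Proof.
  intros l l' HF. induction HF; intros x0 x0' y' Rx Hin.
  - destruct Hin as [<-|[]]. exists x0; simpl; auto.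
  - destruct Hin as [<-|Hin]. exists x0; simpl; auto.
    destruct (IHHF x y y' H Hin) as [g [Hg Rg]]. exists g. split; auto. right; auto.
Qed.

Lemma relC (G : group) (H P : G -> Prop) (X Y : list G) M r N :
  subgroup G H ->
  (forall x, In x X -> In (inv G x) X) ->
  (forall w, (forall x, In x w -> In x X) -> length w <= M + r + M -> H (wprod G w) ->
    exists v, (forall x, In x v -> In x Y) /\ length v <= N /\ wprod G v = wprod G w) ->
  forall g g' y y', rel G P H X M g y -> rel G P H X M g' y' ->
  dist_le G X g g' r -> dist_le G Y y y' (S N).
Proof.
  intros [H1 [HM HI]] Xs HN g g' y y' [q [wq [_ [Hwq [Lq [Eq [Ey [Hy _]]]]]]]]
    [q' [wq' [_ [Hwq' [Lq' [Eq' [Ey' [Hy' _]]]]]]]] [w [Hw [Lw Ew]]].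
  set (W := rev (map (inv G) wq) ++ w ++ wq').
  assert (EW : wprod G W = mul G (inv G y) y').
  { unfold W. rewrite !wprod_app, wprod_inv, Eq, Eq', Ey, Ey', g_inv_mul, <- Ew.
    rewrite <- !mulA. f_equal. rewrite (mulA G (inv G g)), mulVg, mul1g. reflexivity. }
  destruct (HN W) as [v [Hv [Lv Ev]]].
  - unfold W. intros x Hx. apply in_app_iff in Hx. destruct Hx as [Hx|Hx].
    exact (inv_word G X wq Xs Hwq x Hx). apply in_app_iff in Hx. destruct Hx; auto.
  - unfold W. rewrite !length_app, length_rev, length_map. lia.
  - rewrite EW. apply HM; auto.
  - exists v. repeat split; auto. rewrite Ev, EW, mulA, mulgV, mul1g. reflexivity.
Qed.

Theorem lemma4p8 (G : group) (H : G -> Prop) (F : (G -> Prop) -> Prop) :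
  finitely_generated G (fun _ => True) ->
  left_orderable G (fun _ => True) ->
  subgroup G H ->
  finite_index G H ->
  (forall K, F K -> subgroup G K /\ subset G K H) ->
  Hucha G H F ->
  Hucha G (fun _ => True) F.
Proof.
  intros [X0 HX0] HLO HH HF HFK [_ [Y [HY HSw]]].
  split; auto. exists X0. split; auto. intros P HP K HK r Hr.
  pose proof HH as [H1 [HM HI]].
  pose proof HP as [_ [PM [Ptri [Panti P1]]]].
  set (PH := fun x => P x /\ H x).
  assert (HPH : positive_cone G H PH).
  { unfold PH. split; [|split; [|split; [|split]]].
    - intros x [_ h]; auto.
    - intros x y [] []; split; auto.
    - intros g Hg. destruct (Ptri g I) as [h|[h|h]]; auto.
    - intros g [[] []]. apply (Panti g); auto.
    - intros []; auto. }
  destruct (choose_q G H P X0 HH HF HP HX0) as [M HQ].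
  destruct (bound_words G H X0 Y (M + r + M) (proj2 (proj2 HY))) as [N HN].
  destruct (HSw PH HPH K HK (S N) ltac:(lia)) as
    [S [Sneg [[u [v [Pu [Pv Du]]]] [h1 [h2 [Hh1 [Hh2 Dc]]]]]]].
  set (Sw := fun g => exists q, (P q \/ q = one G) /\ S (mul G g q)).
  assert (Dis : forall A B : G -> Prop, (forall x, A x -> H x) -> (forall x, B x -> H x) ->
     r_disconnects G Y (Datatypes.S N) S A B -> r_disconnects G X0 r Sw A B).
  { intros A B HA HB D x l Ax Bl Pl.
    destruct (relB G (rel G P H X0 M) (relA G H P X0 M HQ) (x :: l)) as [L' HL'].
    inversion HL' as [|? x' ? l' Rx Rl]; subst.
    assert (Ex : x' = x).
    { destruct Rx as [_ [_ [_ [_ [_ [_ [_ [_ E]]]]]]]]. auto. }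
    assert (El : last l' x' = last l x).
    { pose proof (last_proj G _ l l' Rl x x' Rx) as [_ [_ [_ [_ [_ [_ [_ [_ E]]]]]]]]. auto. }
    assert (Px : rpath G Y (Datatypes.S N) x' l').
    { eapply (path_proj G (rel G P H X0 M)); [|exact Rl|exact Rx|exact Pl].
      intros. eapply relC; eauto. exact (proj1 (proj2 HX0)). }
    destruct (D x' l') as [y' [Hy' Sy']].
    - rewrite Ex; auto.
    - rewrite El; auto.
    - exact Px.
    - destruct (in_proj G _ l l' Rl x x' y' Rx Hy') as [g [Hg Rg]].
      exists g. split; auto.
      destruct Rg as [q [wq [Pq [_ [_ [_ [Ey _]]]]]]]. exists q. split; auto.
      rewrite <- Ey; auto. }
  exists Sw. split; [|split].
  - intros g [q [Pq Sq]]. destruct (Sneg _ Sq) as [Pgq _].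
    rewrite g_inv_mul in Pgq. destruct Pq as [Pq|Eq].
    + assert (E : inv G g = mul G q (mul G (inv G q) (inv G g))).
      { rewrite mulA, mulgV, mul1g; auto. }
      rewrite E. apply PM; auto.
    + subst q. rewrite g_inv_one, mul1g in Pgq. auto.
  - exists u, v. split; [apply Pu|split; [apply Pv|]].
    apply Dis; auto.
    + intros x ->. apply Pu.
    + intros x ->. apply Pv.
  - exists h1, h2. split; auto. split; auto. apply Dis; auto.
    + intros x [k [Hk ->]]. apply HM; auto. apply (proj2 (HFK K HK)); auto.
    + intros x [k [Hk ->]]. apply HM; auto. apply (proj2 (HFK K HK)); auto.
Qed.
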